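(* The group $Fr(162\times 4)$ is not isomorphic to the group $\Sigma(216\times 3)$ (which also has order $648$).
   Context: Let $\omega=e^{2i\pi/3}$, $\varepsilon=e^{4i\pi/9}$, $J$ the $3\times3$ antidiagonal matrix with antidiagonal entries $1$. $G_1=\mathrm{diag}(e^{7i\pi/9},-e^{4i\pi/9},-e^{7i\pi/9})$, $G_2=\begin{pmatrix}-\tfrac12 e^{4i\pi/9}&\tfrac{1}{\sqrt2}e^{7i\pi/9}&\tfrac12 e^{4i\pi/9}\\ \tfrac{1}{\sqrt2}e^{7i\pi/9}&0&\tfrac{1}{\sqrt2}e^{7i\pi/9}\\ \tfrac12 e^{4i\pi/9}&\tfrac{1}{\sqrt2}e^{7i\pi/9}&-\tfrac12 e^{4i\pi/9}\end{pmatrix}$, $FUM=-\omega J$, $Fr(162\times 4)=\langle G_1,G_2,FUM\rangle\subset SU(3)$. $\Sigma(216\times 3)$ is the subgroup of $SU(3)$ generated by $D=\mathrm{diag}(\varepsilon,\varepsilon,\varepsilon\omega)$ and $V=\frac{1}{i\sqrt3}\begin{pmatrix}1&1&1\\1&\omega&\omega^2\\1&\omega^2&\omega\end{pmatrix}$. *)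

(* Defs.v *)
From HB Require Import structures.
From mathcomp Require Import all_boot all_order all_algebra all_field.
Set Implicit Arguments. Unset Strict Implicit. Unset Printing Implicit Defensive.
Import Order.TTheory GRing.Theory Num.Theory.
Local Open Scope ring_scope.

(* zeta = e^{i pi/9}: the 9th root of -1 with minimal nonnegative argument *)
Definition zeta : algC := 9.-root (-1).
Definition omega : algC := zeta ^+ 6.
Definition eps : algC := zeta ^+ 4.
Definition e7 : algC := zeta ^+ 7.
Definition e4 : algC := zeta ^+ 4.

Definition mx3 (a b c d e f g h k : algC) : 'M[algC]_3 :=
  \matrix_(i < 3, j < 3)
    nth 0 (nth [::] [:: [:: a; b; c]; [:: d; e; f]; [:: g; h; k]] i) j.

Definition Jmx : 'M[algC]_3 := mx3 0 0 1 0 1 0 1 0 0.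

Definition G1 : 'M[algC]_3 := mx3 e7 0 0  0 (- e4) 0  0 0 (- e7).
Definition G2 : 'M[algC]_3 :=
  let s := (sqrtC 2)^-1 in
  mx3 (- (e4 / 2)) (s * e7) (e4 / 2)
      (s * e7) 0 (s * e7)
      (e4 / 2) (s * e7) (- (e4 / 2)).
Definition FUM : 'M[algC]_3 := - omega *: Jmx.

Definition Dmx : 'M[algC]_3 := mx3 eps 0 0  0 eps 0  0 0 (eps * omega).
Definition Vmx : 'M[algC]_3 :=
  ('i * sqrtC 3)^-1 *: mx3 1 1 1  1 omega (omega ^+ 2)  1 (omega ^+ 2) omega.

Inductive gen_by (S : seq 'M[algC]_3) : 'M[algC]_3 -> Prop :=
| gen_mem x : x \in S -> gen_by S x
| gen_one : gen_by S 1%:M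
| gen_mul x y : gen_by S x -> gen_by S y -> gen_by S (x *m y)
| gen_inv x : gen_by S x -> gen_by S (invmx x).

Definition Fr162x4 : 'M[algC]_3 -> Prop := gen_by [:: G1; G2; FUM].
Definition Sigma216x3 : 'M[algC]_3 -> Prop := gen_by [:: Dmx; Vmx].

Definition isomorphic (A B : 'M[algC]_3 -> Prop) : Prop :=
  exists f : 'M[algC]_3 -> 'M[algC]_3,
    (forall x, A x -> B (f x)) /\
    (forall x y, A x -> A y -> f (x *m y) = f x *m f y) /\
    (forall x y, A x -> A y -> f x = f y -> x = y) /\
    (forall z, B z -> exists2 x, A x & f x = z).

(* Main.v *)
Require Import Defs.
From Stdlib Require Import ZArith.
From mathcomp Require Import all_boot all_order all_algebra all_field.
From mathcomp Require Import ssrZ ring lra.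
Import Order.TTheory GRing.Theory Num.Theory.

Local Open Scope Z_scope.
Record K := mkK { k0 : Z; k1 : Z; k2 : Z; k3 : Z; k4 : Z; k5 : Z }.
Definition eqK (a b : K) : bool :=
  [&& Z.eqb (k0 a) (k0 b), Z.eqb (k1 a) (k1 b), Z.eqb (k2 a) (k2 b), Z.eqb (k3 a) (k3 b), Z.eqb (k4 a) (k4 b) & Z.eqb (k5 a) (k5 b)].
Definition addK a b := mkK (k0 a + k0 b) (k1 a + k1 b) (k2 a + k2 b) (k3 a + k3 b) (k4 a + k4 b) (k5 a + k5 b).
Definition mulK a b :=
  let: mkK a0 a1 a2 a3 a4 a5 := a in
  let: mkK b0 b1 b2 b3 b4 b5 := b in
  let d0 := a0*b0 in
  let d1 := a0*b1 + a1*b0 in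
  let d2 := a0*b2 + a1*b1 + a2*b0 in
  let d3 := a0*b3 + a1*b2 + a2*b1 + a3*b0 in
  let d4 := a0*b4 + a1*b3 + a2*b2 + a3*b1 + a4*b0 in
  let d5 := a0*b5 + a1*b4 + a2*b3 + a3*b2 + a4*b1 + a5*b0 in
  let d6 := a1*b5 + a2*b4 + a3*b3 + a4*b2 + a5*b1 in
  let d7 := a2*b5 + a3*b4 + a4*b3 + a5*b2 in
  let d8 := a3*b5 + a4*b4 + a5*b3 in
  let d9 := a4*b5 + a5*b4 in
  let d10 := a5*b5 in
  mkK (d0 - d6 + d9) (d1 - d7 + d10) (d2 - d8) (d3 - d6) (d4 - d7) (d5 - d8).
Definition dv3K a := mkK (k0 a / 3) (k1 a / 3) (k2 a / 3) (k3 a / 3) (k4 a / 3) (k5 a / 3).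
Definition okK a := [&& Z.eqb (k0 a mod 3) 0, Z.eqb (k1 a mod 3) 0, Z.eqb (k2 a mod 3) 0, Z.eqb (k3 a mod 3) 0, Z.eqb (k4 a mod 3) 0 & Z.eqb (k5 a mod 3) 0].
Definition K0 := mkK 0 0 0 0 0 0.
Definition K1 := mkK 3 0 0 0 0 0.
Record M9 := mkM { m00 : K; m01 : K; m02 : K; m10 : K; m11 : K; m12 : K; m20 : K; m21 : K; m22 : K }.
Definition mapM f (A : M9) := let: mkM a b c d e g h i j := A in mkM (f a) (f b) (f c) (f d) (f e) (f g) (f h) (f i) (f j).
Definition allM (p : K -> bool) (A : M9) := let: mkM a b c d e g h i j := A in [&& p a, p b, p c, p d, p e, p g, p h, p i & p j].
Definition eqM (A B : M9) : bool :=
  [&& eqK (m00 A) (m00 B), eqK (m01 A) (m01 B), eqK (m02 A) (m02 B),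
      eqK (m10 A) (m10 B), eqK (m11 A) (m11 B), eqK (m12 A) (m12 B),
      eqK (m20 A) (m20 B), eqK (m21 A) (m21 B) & eqK (m22 A) (m22 B)].
Definition dot3 a1 a2 a3 b1 b2 b3 := addK (addK (mulK a1 b1) (mulK a2 b2)) (mulK a3 b3).
Definition mulMr (A B : M9) : M9 :=
  let: mkM a00 a01 a02 a10 a11 a12 a20 a21 a22 := A in
  let: mkM b00 b01 b02 b10 b11 b12 b20 b21 b22 := B in
  mkM (dot3 a00 a01 a02 b00 b10 b20) (dot3 a00 a01 a02 b01 b11 b21) (dot3 a00 a01 a02 b02 b12 b22)
      (dot3 a10 a11 a12 b00 b10 b20) (dot3 a10 a11 a12 b01 b11 b21) (dot3 a10 a11 a12 b02 b12 b22)
      (dot3 a20 a21 a22 b00 b10 b20) (dot3 a20 a21 a22 b01 b11 b21) (dot3 a20 a21 a22 b02 b12 b22).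
Definition mulM A B := mapM dv3K (mulMr A B).
Definition okMul A B := allM okK (mulMr A B).
Definition I9 := mkM K1 K0 K0 K0 K1 K0 K0 K0 K1.
Fixpoint powM (A : M9) (n : nat) : M9 := if n is n'.+1 then mulM A (powM A n') else I9.
Fixpoint powOk (A : M9) (n : nat) (P : M9) : bool := if n is n'.+1 then okMul A P && powOk A n' (mulM A P) else true.
Definition hK (a : K) := k0 a + 5 * (k1 a + 5 * (k2 a + 5 * (k3 a + 5 * (k4 a + 5 * k5 a)))).
Definition hashM (A : M9) := let: mkM a b c d e g h i j := A in
  hK a + 17 * (hK b + 17 * (hK c + 17 * (hK d + 17 * (hK e + 17 * (hK g + 17 * (hK h + 17 * (hK i + 17 * hK j))))))).
Definition membh (hx : Z) (x : M9) (s : seq (Z * M9)) := has (fun p => Z.eqb hx p.1 && eqM x p.2) s.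
Definition memb (x : M9) (s : seq (Z * M9)) := membh (hashM x) x s.
Fixpoint bfs (fuel : nat) (gens : seq M9) (all : seq (Z * M9)) (todo : seq M9) : seq (Z * M9) :=
  if fuel is f.+1 then
    match todo with
    | [::] => all
    | x :: todo' =>
      let new := foldl (fun acc g => let p := mulM x g in let hp := hashM p in
                          if membh hp p acc.1 then acc else ((hp, p) :: acc.1, p :: acc.2)) (all, todo') gens in
      bfs f gens new.1 new.2
    end
  else all.
Definition yK (k : nat) : K := match k with O => K1 | S O => mkK 0 3 0 0 0 0 | S (S O) => mkK 0 0 3 0 0 0
  | S (S (S O)) => mkK 0 0 0 3 0 0 | S (S (S (S O))) => mkK 0 0 0 0 3 0 | _ => mkK 0 0 0 0 0 3 end.
Definition D0 := mkM (yK 2%nat) K0 K0 K0 (yK 2%nat) K0 K0 K0 (yK 5%nat).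
Definition c0 (sg : Z) := mkK (-sg) 0 0 (-(2*sg)) 0 0.
Definition w0 := yK 3%nat.
Definition mK a b := dv3K (mulK a b).
Definition w2 := mK w0 w0.
Definition V0 sg := let c := c0 sg in
  mkM (mK c K1) (mK c K1) (mK c K1) (mK c K1) (mK c w0) (mK c w2) (mK c K1) (mK c w2) (mK c w0).
Definition Sg sg := bfs 2000%nat [:: D0; V0 sg] [:: (hashM I9, I9)] [:: I9].
Definition checkS (S : seq (Z * M9)) (V : M9) :=
  memb I9 S && all (fun p => let s := p.2 in [&& okMul s D0, memb (mulM s D0) S, okMul s V, memb (mulM s V) S,
      powOk s 18%nat I9 & eqM (powM s 12%nat) I9 || eqM (powM s 18%nat) I9]) S.

Local Close Scope Z_scope.
Local Open Scope ring_scope.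
Ltac fld := field; try by [].

Definition zr (z : Z) : algC := (int_of_Z z)%:~R.
Local Open Scope Z_scope.
Lemma zrD a b : zr (a + b) = (zr a + zr b)%R.
Proof. by rewrite /zr -[(a + b)]/(a + b)%R raddfD intrD. Qed.
Lemma zrN a : zr (- a) = (- zr a)%R.
Proof. by rewrite /zr -[(- a)]/(- a)%R raddfN mulrNz. Qed.
Lemma zrB a b : zr (a - b) = (zr a - zr b)%R.
Proof. by rewrite -[(a - b)]/(a + - b) zrD zrN. Qed.
Lemma zrM a b : zr (a * b) = (zr a * zr b)%R.
Proof. by rewrite /zr -[(a * b)]/(a * b)%R rmorphM intrM. Qed.
Lemma zr0 : zr 0 = 0%R. Proof. by []. Qed.
Lemma zr3 : zr 3 = 3%:R%R. Proof. by []. Qed.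
Lemma zr1 : zr 1 = 1%R. Proof. by []. Qed.
Lemma zrdiv3 a : a mod 3 = 0 -> zr (a / 3) = (zr a / 3%:R)%R.
Proof.
move=> h; have e : a = 3 * (a / 3) by apply/Z.div_exact.
rewrite [in RHS]e zrM zr3.
fld.
Qed.
Local Close Scope Z_scope.

Definition evK (y : algC) (a : K) : algC :=
  (zr (k0 a) + zr (k1 a) * y + zr (k2 a) * y ^+ 2 + zr (k3 a) * y ^+ 3
    + zr (k4 a) * y ^+ 4 + zr (k5 a) * y ^+ 5) / 3.

Section Ev.
Variable y : algC.
Hypothesis hy : y ^+ 6 = - y ^+ 3 - 1.

Lemma evK_add a b : evK y (addK a b) = evK y a + evK y b.
Proof. by case: a; case: b => *; rewrite /evK /= !zrD; fld. Qed.

Lemma evK_mul a b : evK y (mulK a b) = 3 * (evK y a * evK y b).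
Proof.
case: a => a0 a1 a2 a3 a4 a5; case: b => b0 b1 b2 b3 b4 b5.
rewrite /evK /mulK /= !(zrB, zrD, zrM).
move: (zr a0) (zr a1) (zr a2) (zr a3) (zr a4) (zr a5) (zr b0) (zr b1) (zr b2) (zr b3) (zr b4) (zr b5).
move=> A0 A1 A2 A3 A4 A5 B0 B1 B2 B3 B4 B5.
have h7 : y ^+ 7 = - y ^+ 4 - y.
  rewrite [LHS]exprS.
  rewrite hy. ring.
have h8 : y ^+ 8 = - y ^+ 5 - y ^+ 2 by rewrite [LHS]exprS h7; ring.
have h9 : y ^+ 9 = 1.
  rewrite [LHS]exprS h8.
  have -> : y * (- y ^+ 5 - y ^+ 2) = - y ^+ 6 - y ^+ 3 by ring.
  rewrite hy; ring.
have h10 : y ^+ 10 = y by rewrite [LHS]exprS h9; ring.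
transitivity (((A0 + A1 * y + A2 * y ^+ 2 + A3 * y ^+ 3 + A4 * y ^+ 4 + A5 * y ^+ 5) *
   (B0 + B1 * y + B2 * y ^+ 2 + B3 * y ^+ 3 + B4 * y ^+ 4 + B5 * y ^+ 5)) / 3); last by fld.
have E : (A0 + A1 * y + A2 * y ^+ 2 + A3 * y ^+ 3 + A4 * y ^+ 4 + A5 * y ^+ 5) *
   (B0 + B1 * y + B2 * y ^+ 2 + B3 * y ^+ 3 + B4 * y ^+ 4 + B5 * y ^+ 5) =
   (A0*B0) + (A0*B1 + A1*B0)*y + (A0*B2 + A1*B1 + A2*B0)*y^+2 + (A0*B3 + A1*B2 + A2*B1 + A3*B0)*y^+3 + (A0*B4 + A1*B3 + A2*B2 + A3*B1 + A4*B0)*y^+4 + (A0*B5 + A1*B4 + A2*B3 + A3*B2 + A4*B1 + A5*B0)*y^+5 + (A1*B5 + A2*B4 + A3*B3 + A4*B2 + A5*B1)*y^+6 + (A2*B5 + A3*B4 + A4*B3 + A5*B2)*y^+7 + (A3*B5 + A4*B4 + A5*B3)*y^+8 + (A4*B5 + A5*B4)*y^+9 + (A5*B5)*y^+10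
   by ring.
rewrite E h10 h9 h8 h7 hy; fld.
Qed.

Lemma evK_dv3 a : okK a -> evK y (dv3K a) = evK y a / 3.
Proof.
case: a => a0 a1 a2 a3 a4 a5; rewrite /okK /dv3K /evK /=.
move=> /andP[/Z.eqb_eq h0 /andP[/Z.eqb_eq h1 /andP[/Z.eqb_eq h2 /andP[/Z.eqb_eq h3 /andP[/Z.eqb_eq h4 /Z.eqb_eq h5]]]]].
rewrite !zrdiv3 //; fld.
Qed.

Lemma evK_dot3 a1 a2 a3 b1 b2 b3 :
  evK y (dot3 a1 a2 a3 b1 b2 b3) = 3 * (evK y a1 * evK y b1 + evK y a2 * evK y b2 + evK y a3 * evK y b3).
Proof. by rewrite /dot3 !evK_add !evK_mul; ring. Qed.

End Ev.

Local Open Scope ring_scope.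
Local Open Scope ring_scope.

Lemma mx3_mul (a00 a01 a02 a10 a11 a12 a20 a21 a22 b00 b01 b02 b10 b11 b12 b20 b21 b22 : algC) :
  mx3 a00 a01 a02 a10 a11 a12 a20 a21 a22 *m mx3 b00 b01 b02 b10 b11 b12 b20 b21 b22 =
  mx3 (a00*b00 + a01*b10 + a02*b20) (a00*b01 + a01*b11 + a02*b21) (a00*b02 + a01*b12 + a02*b22)
      (a10*b00 + a11*b10 + a12*b20) (a10*b01 + a11*b11 + a12*b21) (a10*b02 + a11*b12 + a12*b22)
      (a20*b00 + a21*b10 + a22*b20) (a20*b01 + a21*b11 + a22*b21) (a20*b02 + a21*b12 + a22*b22).
Proof.
apply/matrixP => i j; rewrite !mxE !big_ord_recr big_ord0 /= !mxE.
by case: i => [[|[|[|i]]] Hi] //=; case: j => [[|[|[|j]]] Hj] //=; ring.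
Qed.

Lemma mx3_scale (c a00 a01 a02 a10 a11 a12 a20 a21 a22 : algC) :
  c *: mx3 a00 a01 a02 a10 a11 a12 a20 a21 a22 =
  mx3 (c*a00) (c*a01) (c*a02) (c*a10) (c*a11) (c*a12) (c*a20) (c*a21) (c*a22).
Proof.
apply/matrixP => i j; rewrite !mxE.
by case: i => [[|[|[|i]]] Hi] //=; case: j => [[|[|[|j]]] Hj].
Qed.

Lemma mx3_1 : mx3 1 0 0 0 1 0 0 0 1 = 1%:M.
Proof.
apply/matrixP => i j; rewrite !mxE.
by case: i => [[|[|[|i]]] Hi] //=; case: j => [[|[|[|j]]] Hj].
Qed.

Definition evM (y : algC) (A : M9) : 'M[algC]_3 :=
  mx3 (evK y (m00 A)) (evK y (m01 A)) (evK y (m02 A)) (evK y (m10 A)) (evK y (m11 A))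
      (evK y (m12 A)) (evK y (m20 A)) (evK y (m21 A)) (evK y (m22 A)).

Section EvM.
Variable y : algC.
Hypothesis hy : y ^+ 6 = - y ^+ 3 - 1.

Lemma evM_mul A B : okMul A B -> evM y (mulM A B) = evM y A *m evM y B.
Proof.
case: A => a00 a01 a02 a10 a11 a12 a20 a21 a22; case: B => b00 b01 b02 b10 b11 b12 b20 b21 b22.
rewrite /okMul /mulM /mulMr /mapM /allM /evM /=.
move=> /andP[o1 /andP[o2 /andP[o3 /andP[o4 /andP[o5 /andP[o6 /andP[o7 /andP[o8 o9]]]]]]]].
rewrite mx3_mul !evK_dv3 // !evK_dot3 //.
congr mx3; by field.
Qed.

Lemma evK1 : evK y K1 = 1. Proof. by rewrite /evK /= zr3 !zr0; field. Qed.
Lemma evK0 : evK y K0 = 0. Proof. by rewrite /evK /= !zr0; field. Qed.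
Lemma evI9 : evM y I9 = 1%:M. Proof. by rewrite /evM /= evK1 evK0 mx3_1. Qed.

End EvM.

Local Open Scope ring_scope.

Lemma eqK_eq a b : eqK a b -> a = b.
Proof.
case: a => a0 a1 a2 a3 a4 a5; case: b => b0 b1 b2 b3 b4 b5; rewrite /eqK /=.
by move=> /andP[/Z.eqb_eq -> /andP[/Z.eqb_eq -> /andP[/Z.eqb_eq -> /andP[/Z.eqb_eq -> /andP[/Z.eqb_eq -> /Z.eqb_eq ->]]]]].
Qed.

Lemma eqM_eq A B : eqM A B -> A = B.
Proof.
case: A => a00 a01 a02 a10 a11 a12 a20 a21 a22; case: B => b00 b01 b02 b10 b11 b12 b20 b21 b22.
rewrite /eqM /=.
by move=> /andP[/eqK_eq -> /andP[/eqK_eq -> /andP[/eqK_eq -> /andP[/eqK_eq -> /andP[/eqK_eq -> /andP[/eqK_eq -> /andP[/eqK_eq -> /andP[/eqK_eq -> /eqK_eq ->]]]]]]]].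
Qed.

Lemma has_In (T : Type) (p : T -> bool) s : has p s -> exists x, List.In x s /\ p x.
Proof.
elim: s => //= x s IH /orP[h|/IH[z [h1 h2]]]; first by exists x; split => //; left.
by exists z; split => //; right.
Qed.

Lemma all_In (T : Type) (p : T -> bool) s : all p s -> forall x, List.In x s -> p x.
Proof.
elim: s => //= x s IH /andP[h1 h2] z [<-|hz] //; exact: IH.
Qed.

Lemma memb_In x S : memb x S -> exists p, List.In p S /\ x = p.2.
Proof.
rewrite /memb /membh => /has_In[p [hp /andP[_ /eqM_eq ->]]]; by exists p.
Qed.
Arguments memb_In {x S}.

Lemma powM_iter A n : powM A n = ssrnat.iter n (mulM A) I9.
Proof. by elim: n => //= n ->. Qed.

Lemma powOk_trunc s m : forall n P, powOk s (m + n) P -> powOk s m P.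
Proof.
elim: m => //= m IH n P /andP[h1 h2]; rewrite h1 /=; exact: IH h2.
Qed.

Section Grp.
Variable y : algC.
Hypothesis hy : y ^+ 6 = - y ^+ 3 - 1.

Lemma mulE (A B : 'M[algC]_3) : A *m B = A * B. Proof. by []. Qed.

Lemma powOk_ev s : forall n P, powOk s n P ->
  evM y (ssrnat.iter n (mulM s) P) = evM y s ^+ n * evM y P.
Proof.
elim=> [|n IH] P /=; first by rewrite expr0 mul1r.
move=> /andP[h1 h2]; by rewrite -iterS iterSr IH // evM_mul // mulE exprSr mulrA.
Qed.

Lemma powM_ev s n : powOk s n I9 -> evM y (powM s n) = evM y s ^+ n.
Proof. by move=> h; rewrite powM_iter powOk_ev // evI9 // mulr1. Qed.

Variable S : seq (Z * M9).
Variable V : M9.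
Hypothesis hc : checkS S V.
Hypothesis hD : Dmx = evM y D0.
Hypothesis hV : Vmx = evM y V.

Definition inSig (z : 'M[algC]_3) := exists p, List.In p S /\ z = evM y p.2.

Lemma hc1 : memb I9 S.
Proof. by move: hc; rewrite /checkS => /andP[]. Qed.

Lemma hc2 p : List.In p S ->
  [&& okMul p.2 D0, memb (mulM p.2 D0) S, okMul p.2 V, memb (mulM p.2 V) S,
      powOk p.2 18 I9 & eqM (powM p.2 12) I9 || eqM (powM p.2 18) I9].
Proof. by move: hc; rewrite /checkS => /andP[_ /all_In]; apply. Qed.
Arguments hc2 {p}.

Lemma inSig1 : inSig 1%:M.
Proof.
have [p [hp e]] := memb_In hc1; exists p; split => //.
by rewrite -e evI9.
Qed.

Lemma inSig_exp z : inSig z -> z ^+ 12 = 1 \/ z ^+ 18 = 1.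
Proof.
move=> [p [hp ->]].
move: (hc2 hp) => /andP[_ /andP[_ /andP[_ /andP[_ /andP[h18 /orP[/eqM_eq e|/eqM_eq e]]]]]].
  left; rewrite -powM_ev; last by apply: (@powOk_trunc _ 12 6).
  by rewrite e evI9.
by right; rewrite -powM_ev // e evI9.
Qed.

Definition Qs (z : 'M[algC]_3) := forall x, inSig x -> inSig (x *m z).

Lemma Qs_mem z : Qs z -> inSig z.
Proof. by move=> h; have := h _ inSig1; rewrite mul1mx. Qed.

Lemma Qs1 : Qs 1%:M. Proof. by move=> x; rewrite mulmx1. Qed.
Lemma QsM a b : Qs a -> Qs b -> Qs (a *m b).
Proof. by move=> ha hb x hx; rewrite mulmxA; apply: hb; apply: ha. Qed.
Lemma QsX a n : Qs a -> Qs (a ^+ n).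
Proof.
move=> ha; elim: n => [|n IH]; first exact: Qs1.
by rewrite exprS -mulE; apply: QsM.
Qed.

Lemma QsD : Qs Dmx.
Proof.
move=> x [p [hp ->]]; move: (hc2 hp) => /andP[ok1 /andP[m1 _]].
have [q [hq e]] := memb_In m1; exists q; split => //.
by rewrite -e evM_mul // hD.
Qed.
Lemma QsV : Qs Vmx.
Proof.
move=> x [p [hp ->]]; move: (hc2 hp) => /andP[_ /andP[_ /andP[ok1 /andP[m1 _]]]].
have [q [hq e]] := memb_In m1; exists q; split => //.
by rewrite -e evM_mul // hV.
Qed.

Lemma unit_inv (z : 'M[algC]_3) : z ^+ 36 = 1 -> invmx z = z ^+ 35.
Proof.
move=> h.
have e : z *m z ^+ 35 = 1%:M by rewrite mulE -exprS h.
have [hu _] := mulmx1_unit e.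
by rewrite -[RHS]mul1mx -(mulVmx hu) -mulmxA e mulmx1.
Qed.

Lemma QsInv a : Qs a -> Qs (invmx a).
Proof.
move=> ha; have hm := Qs_mem _ ha.
have h36 : a ^+ 36 = 1.
  case: (inSig_exp _ hm) => e.
    have -> : a ^+ 36 = (a ^+ 12) ^+ 3 by rewrite -exprM.
    by rewrite e expr1n.
  have -> : a ^+ 36 = (a ^+ 18) ^+ 2 by rewrite -exprM.
  by rewrite e expr1n.
rewrite (unit_inv _ h36); exact: QsX.
Qed.

Lemma sig_exp z : Sigma216x3 z -> z ^+ 12 = 1 \/ z ^+ 18 = 1.
Proof.
move=> h; apply: inSig_exp; apply: Qs_mem.
elim: h => [x|||x hx IH].
- rewrite in_cons => /orP[/eqP ->|]; first exact: QsD.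
  rewrite in_cons => /orP[/eqP ->|]; first exact: QsV.
  by rewrite in_nil.
- exact: Qs1.
- by move=> x w _ hx _ hw; apply: QsM.
- exact: QsInv.
Qed.

End Grp.

Local Open Scope ring_scope.

Lemma cub (a : algR) : 4*a^+2 <= 1 -> 4*a^+3 - 3*a = 1/2 -> a < 0.
Proof.
move=> h1 h2; rewrite ltNge; apply/negP=> ha.
have h3 : 0 <= a * (1 - 4*a^+2) by apply: mulr_ge0 => //; lra.
nra.
Qed.
Lemma c1 (a b : algR) : 0 <= b -> a <= 1/2 -> a^+2 + b^+2 = 1 -> a^+3 - 3*a*b^+2 = 1/2 -> a < 0.
Proof.
move=> hb ha h1 h2.
have h4 : 4*a^+3 - 3*a = 1/2.
  have e : b^+2 = 1 - a^+2 by lra.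
  rewrite e in h2; rewrite -h2; ring.
rewrite ltNge; apply/negP=> a0.
have : a * (1/4 - a^+2) >= 0.
  apply: mulr_ge0 => //. nra.
nra.
Qed.
Lemma c2 (a b : algR) : b < 0 -> 0 <= 3*a^+2*b - b^+3 -> a^+2 + b^+2 = 1 -> a^+3 - 3*a*b^+2 = 1/2 -> a < 0.
Proof.
move=> hb ha h1 h2.
have h4 : 4*a^+3 - 3*a = 1/2.
  have e : b^+2 = 1 - a^+2 by lra.
  rewrite e in h2; rewrite -h2; ring.
have h5 : 3*a^+2 - b^+2 <= 0.
  have e : 3*a^+2*b - b^+3 = b * (3*a^+2 - b^+2) by ring.
  rewrite e in ha.
  by rewrite nmulr_rge0 in ha.
apply: cub => //; lra.
Qed.
Lemma c3 (a b : algR) : 1/2 <= a -> a^+2 + b^+2 = 1 -> a^+3 - 3*a*b^+2 = -1 -> a = 1/2.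
Proof.
move=> ha h1 h2.
have h4 : (a + 1) * (2*a - 1)^+2 = 0.
  have e : b^+2 = 1 - a^+2 by lra.
  rewrite e in h2. have : 4*a^+3 - 3*a + 1 = 0 by lra.
  move=> h; rewrite -h; ring.
move/eqP: h4; rewrite mulf_eq0 expf_eq0 /=; case/orP => /eqP; lra.
Qed.

Definition ra (u : algC) : algR := in_algR (Creal_Re u).
Definition ia (u : algC) : algR := in_algR (Creal_Im u).

Lemma Re3 (u : algC) : 'Re (u ^+ 3) = algRval (ra u ^+ 3 - 3 * ra u * ia u ^+ 2).
Proof.
rewrite !(rmorphB, rmorphM, rmorphXn, rmorph_nat) /=.
rewrite exprS ReM expr2 ReM ImM; ring.
Qed.
Lemma Im3 (u : algC) : 'Im (u ^+ 3) = algRval (3 * ra u ^+ 2 * ia u - ia u ^+ 3).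
Proof.
rewrite !(rmorphB, rmorphM, rmorphXn, rmorph_nat) /=.
rewrite exprS ImM expr2 ReM ImM; ring.
Qed.
Lemma Re3' (u : algC) : ra (u ^+ 3) = ra u ^+ 3 - 3 * ra u * ia u ^+ 2.
Proof. apply: val_inj; rewrite -[RHS]/(algRval (ra u ^+ 3 - 3 * ra u * ia u ^+ 2)) -Re3 //. Qed.
Lemma Im3' (u : algC) : ia (u ^+ 3) = 3 * ra u ^+ 2 * ia u - ia u ^+ 3.
Proof. apply: val_inj; rewrite -[RHS]/(algRval (3 * ra u ^+ 2 * ia u - ia u ^+ 3)) -Im3 //. Qed.
Lemma norm2 (u : algC) : `|u| = 1 -> ra u ^+ 2 + ia u ^+ 2 = 1.
Proof.
move=> h; apply: val_inj; rewrite rmorphD !rmorphXn rmorph1 /= -normC2_Re_Im h.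
by rewrite expr1n.
Qed.
Lemma norm9 (u : algC) : u ^+ 9 = -1 -> `|u| = 1.
Proof.
move=> h; have e : `|u| ^+ 9 = 1 by rewrite -normrX h normrN normr1.
by apply/eqP; rewrite -(@pexpr_eq1 _ `|u| 9) // e.
Qed.

Lemma valRe (u : algC) : algRval (ra u) = 'Re u. Proof. by []. Qed.

Lemma half_le (u : algC) x : (algRval x <= 'Re u) = (x <= ra u). Proof. by []. Qed.

Definition Yc : algC := (1 + 'i * sqrtC 3) / 2.
Definition w3 : algC := (-1 + 'i * sqrtC 3) / 2.

Lemma sq3 : sqrtC 3 ^+ 2 = 3 :> algC. Proof. by rewrite sqrtCK. Qed.

Lemma Yc3 : Yc ^+ 3 = -1.
Proof.
rewrite /Yc.
have e : ((1 + 'i * sqrtC 3) / 2) ^+ 3 = (1 + 3 * ('i * sqrtC 3) + 3 * ('i ^+ 2 * sqrtC 3 ^+ 2)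
   + 'i ^+ 2 * 'i * (sqrtC 3 ^+ 2 * sqrtC 3)) / 8 :> algC by field.
by rewrite e sqrCi sq3; field.
Qed.

Lemma w33 : w3 ^+ 3 = 1.
Proof.
rewrite /w3.
have e : ((-1 + 'i * sqrtC 3) / 2) ^+ 3 = (-1 + 3 * ('i * sqrtC 3) - 3 * ('i ^+ 2 * sqrtC 3 ^+ 2)
   + 'i ^+ 2 * 'i * (sqrtC 3 ^+ 2 * sqrtC 3)) / 8 :> algC by field.
by rewrite e sqrCi sq3; field.
Qed.

Lemma w3sum : 1 + w3 + w3 ^+ 2 = 0.
Proof.
rewrite /w3.
have e : 1 + (-1 + 'i * sqrtC 3) / 2 + ((-1 + 'i * sqrtC 3) / 2) ^+ 2 =
   (2 + 2 * ('i * sqrtC 3) + 1 - 2 * ('i * sqrtC 3) + 'i ^+ 2 * sqrtC 3 ^+ 2) / 4 :> algC by field.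
by rewrite e sqrCi sq3; field.
Qed.

Lemma zeta9 : zeta ^+ 9 = -1.
Proof. by rewrite /zeta rootCK. Qed.

Lemma zeta6 : zeta ^+ 6 != 1.
Proof.
apply/negP => /eqP z6.
have z3 : zeta ^+ 3 = -1 by have := zeta9; rewrite (exprD _ 6 3) z6 mul1r.
have Imz : 0 <= 'Im zeta := Im_rootC_ge0 _ (isT : (1 < 9)%N).
have maxz : forall u, u ^+ 9 = -1 -> 0 <= 'Im u -> 'Re u <= 'Re zeta.
  by move=> u hu hi; apply: rootC_Re_max.
have Rez : ra zeta = 1/2.
  apply: (@c3 _ (ia zeta)).
  - have Y9 : Yc ^+ 9 = -1.
      have -> : Yc ^+ 9 = (Yc ^+ 3) ^+ 3 by rewrite -exprM.
      by rewrite Yc3; ring.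
    have hY : Yc = 1/2 + 'i * (sqrtC 3 / 2) by rewrite /Yc; field.
    have r2 : (1/2 : algC) \is Creal by rewrite rpred_div ?rpred1 ?rpred_nat.
    have s3 : (0 : algC) <= sqrtC 3 / 2 by rewrite divr_ge0 ?sqrtC_ge0 ?ler0n.
    have r3 : (sqrtC 3 / 2 : algC) \is Creal by rewrite realE s3.
    have := maxz Yc Y9; rewrite hY Im_rect // Re_rect // => /(_ s3) h.
    suff: algRval (1/2 : algR) <= 'Re zeta by [].
    by rewrite fmorph_div rmorph1 rmorph_nat.
  - apply: norm2; apply: norm9; exact: zeta9.
  - apply: val_inj; rewrite -[LHS]/(algRval (ra zeta ^+ 3 - 3 * ra zeta * ia zeta ^+ 2)).
    rewrite -Re3 z3 rmorphN rmorph1 raddfN /=.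
    by rewrite (Creal_ReP _ _) ?rpred1.
pose t := 3.-root zeta.
have ht : t ^+ 3 = zeta by rewrite /t rootCK.
pose u k := t * w3 ^+ k.
have hu k : u k ^+ 3 = zeta.
  by rewrite /u exprMn ht -exprM mulnC exprM w33 expr1n mulr1.
have hu9 k : u k ^+ 9 = -1.
  have -> : u k ^+ 9 = (u k ^+ 3) ^+ 3 by rewrite -exprM.
  by rewrite hu z3.
have Imz' : 0 <= ia zeta by [].
have neg k : ra (u k) < 0.
  have h1 := norm2 _ (norm9 _ (hu9 k)).
  have h2 : ra (u k) ^+ 3 - 3 * ra (u k) * ia (u k) ^+ 2 = 1/2.
    by rewrite -Rez -Re3' hu.
  have h3 : 3 * ra (u k) ^+ 2 * ia (u k) - ia (u k) ^+ 3 = ia zeta.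
    by rewrite -Im3' hu.
  case: (ltP (ia (u k)) 0) => hb.
    by apply: (c2 _ _ hb _ h1 h2); rewrite h3.

  apply: (c1 _ _ hb _ h1 h2).
  suff: 'Re (u k) <= algRval (1/2 : algR) by [].
  rewrite -Rez; exact: maxz (hu9 k) hb.
have hs : ra (u 0) + ra (u 1) + ra (u 2) = 0.
  apply: val_inj; rewrite !rmorphD /= -!raddfD /= /u -!mulrDr expr0 expr1.
  by rewrite w3sum mulr0 raddf0.
have := neg 0; have := neg 1; have := neg 2; lra.
Qed.
Local Open Scope ring_scope.

Definition yz : algC := zeta ^+ 2.

Lemma zeta18 : zeta ^+ 18 = 1.
Proof. by rewrite (_ : 18 = 9 * 2)%N // exprM zeta9 sqrrN expr1n. Qed.

Lemma hy : yz ^+ 6 = - yz ^+ 3 - 1.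
Proof.
have h9 : yz ^+ 9 = 1 by rewrite /yz -exprM zeta18.
have h3 : yz ^+ 3 - 1 != 0 by rewrite subr_eq0 /yz -exprM zeta6.
have : (yz ^+ 3 - 1) * (yz ^+ 6 + yz ^+ 3 + 1) = 0.
  have -> : (yz ^+ 3 - 1) * (yz ^+ 6 + yz ^+ 3 + 1) = yz ^+ 9 - 1 by ring.
  by rewrite h9 subrr.
move/eqP; rewrite mulf_eq0 (negbTE h3) /= => /eqP h.
transitivity ((yz ^+ 6 + yz ^+ 3 + 1) - yz ^+ 3 - 1); first by ring.
by rewrite h; ring.
Qed.

Lemma evK_yK2 : evK yz (yK 2) = yz ^+ 2.
Proof. by rewrite /evK /= zr3 !zr0; field. Qed.
Lemma evK_yK3 : evK yz (yK 3) = yz ^+ 3.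
Proof. by rewrite /evK /= zr3 !zr0; field. Qed.
Lemma evK_yK5 : evK yz (yK 5) = yz ^+ 5.
Proof. by rewrite /evK /= zr3 !zr0; field. Qed.

Lemma hD : Dmx = evM yz D0.
Proof.
rewrite /Dmx /evM /= evK_yK2 evK_yK5 (evK0 yz).
by rewrite /eps /omega /yz -!exprM -exprD.
Qed.

Lemma evmK a b : okK (mulK a b) -> evK yz (mK a b) = evK yz a * evK yz b.
Proof. move=> h; rewrite /mK evK_dv3 // evK_mul; last exact: hy. by field. Qed.

Lemma hV (sg : Z) : okK (mulK (c0 sg) K1) -> okK (mulK (c0 sg) w0) -> okK (mulK (c0 sg) w2) ->
  okK (mulK w0 w0) -> ('i * sqrtC 3)^-1 = evK yz (c0 sg) -> Vmx = evM yz (V0 sg).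
Proof.
move=> o1 o2 o3 o4 hc.
rewrite /Vmx /evM /V0 /= mx3_scale.
rewrite (evmK _ _ o1) (evmK _ _ o2) (evmK _ _ o3) /w2 (evmK _ _ o4) (evK1 yz) evK_yK3 -hc.
by rewrite /omega /yz -!exprM -exprD !mulr1.
Qed.

Lemma diag_pow (a b c : algC) n :
  (mx3 a 0 0 0 b 0 0 0 c) ^+ n = mx3 (a ^+ n) 0 0 0 (b ^+ n) 0 0 0 (c ^+ n).
Proof.
elim: n => [|n IH]; first by rewrite !expr0 mx3_1.
rewrite exprS IH -mulE mx3_mul !exprS; congr mx3; ring.
Qed.

Lemma zmod n : zeta ^+ n = zeta ^+ (n %% 18).
Proof. by rewrite {1}(divn_eq n 18) exprD mulnC exprM zeta18 expr1n mul1r. Qed.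

Definition xF := G1 *m FUM.

Lemma xF2 : xF ^+ 2 = mx3 (- (omega ^+ 2 * e7 ^+ 2)) 0 0 0 (omega ^+ 2 * e4 ^+ 2) 0 0 0 (- (omega ^+ 2 * e7 ^+ 2)).
Proof.
rewrite expr2 -mulE /xF /G1 /FUM /Jmx mx3_scale !mx3_mul; congr mx3; ring.
Qed.

Definition i1 : 'I_3 := Ordinal (isT : (1 < 3)%N).
Definition i0 : 'I_3 := Ordinal (isT : (0 < 3)%N).

Lemma mx3_11 (a b c d e g h k l : algC) : mx3 a b c d e g h k l i1 i1 = e.
Proof. by rewrite mxE. Qed.
Lemma mx3_00 (a b c d e g h k l : algC) : mx3 a b c d e g h k l i0 i0 = a.
Proof. by rewrite mxE. Qed.
Lemma one_ii (i : 'I_3) : (1%:M : 'M[algC]_3) i i = 1.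
Proof. by rewrite mxE eqxx. Qed.

Lemma xF12 : xF ^+ 12 != 1.
Proof.
apply/eqP => h.
have : (xF ^+ 2) ^+ 6 = 1 by rewrite -exprM.
rewrite xF2 diag_pow => /(congr1 (fun M : 'M[algC]_3 => M i1 i1)).
rewrite mx3_11 one_ii /omega /e4 -!exprM -exprD -exprM zmod /= => z12.
have : zeta ^+ 6 = 1.
  by have := zeta18; rewrite (_ : 18 = 12 + 6)%N // exprD z12 mul1r.
by move=> /eqP; rewrite (negbTE zeta6).
Qed.

Lemma xF18 : xF ^+ 18 != 1.
Proof.
apply/eqP => h.
have : (xF ^+ 2) ^+ 9 = 1 by rewrite -exprM.
rewrite xF2 diag_pow => /(congr1 (fun M : 'M[algC]_3 => M i0 i0)).
rewrite mx3_00 one_ii /omega /e7 -!exprM -exprD exprNn -exprM zmod /= expr0 mulr1.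
move=> /eqP; rewrite -signr_odd /= expr1 lt_eqF //.
by rewrite (lt_trans (ltrN10 _)) ?ltr01.
Qed.


Local Open Scope Z_scope.
Lemma chkP : checkS (Sg 1) (V0 1). Proof. vm_cast_no_check (erefl true). Qed.
Lemma chkN : checkS (Sg (-1)) (V0 (-1)). Proof. vm_cast_no_check (erefl true). Qed.
Lemma okP1 : okK (mulK (c0 1) K1). Proof. by vm_compute. Qed.
Lemma okP2 : okK (mulK (c0 1) w0). Proof. by vm_compute. Qed.
Lemma okP3 : okK (mulK (c0 1) w2). Proof. by vm_compute. Qed.
Lemma okN1 : okK (mulK (c0 (-1)) K1). Proof. by vm_compute. Qed.
Lemma okN2 : okK (mulK (c0 (-1)) w0). Proof. by vm_compute. Qed.
Lemma okN3 : okK (mulK (c0 (-1)) w2). Proof. by vm_compute. Qed.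
Lemma okw : okK (mulK w0 w0). Proof. by vm_compute. Qed.
Lemma zrm1 : zr (-1) = (-1)%R. Proof. by rewrite -[Z.neg 1]/(Z.opp 1) zrN zr1. Qed.
Lemma zr2 : zr 2 = 2%:R%R. Proof. by []. Qed.
Local Close Scope Z_scope.
Local Open Scope ring_scope.

Lemma evc0 sg : evK yz (c0 sg) = - zr sg * (1 + 2 * yz ^+ 3) / 3.
Proof. rewrite /evK /c0; cbn [k0 k1 k2 k3 k4 k5]; rewrite !zrN zrM zr2 !zr0. by field. Qed.

Lemma inv_of (a b : algC) : a * b = 1 -> a^-1 = b.
Proof.
move=> h; have ha : a != 0 by apply/eqP => a0; move: h; rewrite a0 mul0r => /eqP; rewrite eq_sym oner_eq0.
by rewrite -(mulKf ha b) h mulr1.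
Qed.

Lemma sign : ('i * sqrtC 3)^-1 = evK yz (c0 1) \/ ('i * sqrtC 3)^-1 = evK yz (c0 (-1)).
Proof.
set u := 1 + 2 * yz ^+ 3; set v := 'i * sqrtC 3.
have hu : u ^+ 2 = -3.
  have -> : u ^+ 2 = 1 + 4 * yz ^+ 3 + 4 * yz ^+ 6 by rewrite /u; ring.
  by rewrite hy; ring.
have hv : v ^+ 2 = -3 by rewrite /v exprMn sqrCi sqrtCK mulN1r.
have : (v - u) * (v + u) = 0.
  have -> : (v - u) * (v + u) = v ^+ 2 - u ^+ 2 by ring.
  by rewrite hu hv subrr.
move/eqP; rewrite mulf_eq0 => /orP[/eqP h|/eqP h].
  left; rewrite evc0 zr1; apply: inv_of.
  have -> : v = u by apply/eqP; rewrite -subr_eq0 h.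
  have -> : u * (- 1 * u / 3) = - (u ^+ 2) / 3 by ring.
  by rewrite hu opprK; field.
right; rewrite evc0 zrm1; apply: inv_of.
have -> : v = - u by apply/eqP; rewrite -subr_eq0 opprK h.
have -> : - u * (- - 1 * u / 3) = - (u ^+ 2) / 3 by ring.
by rewrite hu opprK; field.
Qed.

Lemma sigma_exp z : Sigma216x3 z -> z ^+ 12 = 1 \/ z ^+ 18 = 1.
Proof.
case: sign => hs.
  exact: (sig_exp _ hy _ _ chkP hD (hV _ okP1 okP2 okP3 okw hs)).
exact: (sig_exp _ hy _ _ chkN hD (hV _ okN1 okN2 okN3 okw hs)).
Qed.

Lemma Fr_pow x n : Fr162x4 x -> Fr162x4 (x ^+ n).
Proof.
move=> hx; elim: n => [|n IH]; first exact: gen_one.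
by rewrite exprS -mulE; apply: gen_mul.
Qed.

Lemma FrxF : Fr162x4 xF.
Proof.
apply: gen_mul; apply: gen_mem; first exact: mem_head.
by rewrite in_cons in_cons mem_head !orbT.
Qed.

Theorem theorem9 : ~ isomorphic Fr162x4 Sigma216x3.
Proof.
move=> [f [hfB [hfM [hfI _]]]].
have F1 : Fr162x4 1%:M := gen_one _.
have f1 : f 1%:M = 1%:M.
  have he : f 1%:M *m f 1%:M = f 1%:M by rewrite -hfM // mul1mx.
  have hp : forall n, f 1%:M ^+ n.+1 = f 1%:M.
    elim=> [|n IH]; first by rewrite expr1.
    by rewrite exprS IH -mulE he.
  case: (sigma_exp _ (hfB _ F1)) => e.
    by rewrite -(hp 11%N) e.
  by rewrite -(hp 17%N) e.
have fpow : forall x n, Fr162x4 x -> f (x ^+ n) = f x ^+ n.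
  move=> x n hx; elim: n => [|n IH]; first by rewrite !expr0 f1.
  by rewrite !exprS -!mulE hfM ?IH //; apply: Fr_pow.
case: (sigma_exp _ (hfB _ FrxF)) => e.
  have : xF ^+ 12 = 1%:M.
    apply: hfI; [exact: Fr_pow FrxF|exact: F1|by rewrite (fpow _ _ FrxF) e f1].
  by move/eqP; rewrite (negbTE xF12).
have : xF ^+ 18 = 1%:M.
  apply: hfI; [exact: Fr_pow FrxF|exact: F1|by rewrite (fpow _ _ FrxF) e f1].
by move/eqP; rewrite (negbTE xF18).
Qed.
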